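(* Let $g:\mathbb{R}\to\mathbb{R}$ be locally Lipschitz continuous with $g(0)=0$, $g(x)x>0$ for all $x\neq0$, $g_0:=\liminf_{|x|\to0}g(x)/x>0$, and $g$ bounded on $\mathbb{R}^-$. Let $\mathcal{G}(x)=\int_0^x g(\xi)\,d\xi$. For $\lambda>0$ consider the autonomous system $x'=y$, $y'=-\lambda g(x)$, and for $0<c<\min\{\mathcal{G}(-\infty),\mathcal{G}(+\infty)\}$ let $\tau(c)$ be the period of the closed orbit $\{\tfrac12 y^2+\lambda\mathcal{G}(x)=\lambda c\}$, i.e. $\tau(c)=\tau^+(c)+\tau^-(c)$ with $$\tau^+(c)=\sqrt{\tfrac{2}{\lambda}}\int_0^{x_+}\frac{d\xi}{\sqrt{c-\mathcal{G}(\xi)}},\qquad \tau^-(c)=\sqrt{\tfrac{2}{\lambda}}\int_{x_-}^0\frac{d\xi}{\sqrt{c-\mathcal{G}(\xi)}},$$ where $x_-<0<x_+$ satisfy $\mathcal{G}(x_-)=\mathcal{G}(x_+)=c$. Then, for each $\lambda>0$, the time-map $\tau$ is continuous and its range includes the interval $]2\pi/\sqrt{\lambda g_0},+\infty[$.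
   Context: $\mathcal{G}(\pm\infty)$ denote the limits (possibly $+\infty$) of $\mathcal{G}(x)$ as $x\to\pm\infty$, which exist since $\mathcal{G}$ is monotone on each half-line. *)

(* Defs.v *)
From Stdlib Require Import Reals.
From Coquelicot Require Import Coquelicot.
Open Scope R_scope.

Definition locally_lipschitz (g : R -> R) : Prop :=
  forall x : R, exists delta : R, exists L : R, 0 < delta /\
    forall y z : R, Rabs (y - x) < delta -> Rabs (z - x) < delta ->
      Rabs (g y - g z) <= L * Rabs (y - z).

Definition is_liminf_at0 (f : R -> R) (l : R) : Prop :=
  (forall eps : R, 0 < eps -> exists delta : R, 0 < delta /\
      forall x : R, 0 < Rabs x < delta -> l - eps < f x) /\
  (forall eps : R, 0 < eps -> forall delta : R, 0 < delta ->
      exists x : R, 0 < Rabs x < delta /\ f x < l + eps).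

Definition Gprim (g : R -> R) (x : R) : R := RInt g 0 x.

Definition admissible (g : R -> R) (c : R) : Prop :=
  0 < c /\ Rbar_lt (Finite c)
    (Rbar_min (Lim (Gprim g) m_infty) (Lim (Gprim g) p_infty)).

Definition integrand (g : R -> R) (c : R) (xi : R) : R :=
  1 / sqrt (c - Gprim g xi).

Definition tau_plus (g : R -> R) (lambda : R) (xp : R -> R) (c : R) : R :=
  sqrt (2 / lambda) * RInt_gen (integrand g c) (at_point 0) (at_left (xp c)).

Definition tau_minus (g : R -> R) (lambda : R) (xm : R -> R) (c : R) : R :=
  sqrt (2 / lambda) * RInt_gen (integrand g c) (at_right (xm c)) (at_point 0).

Definition tau (g : R -> R) (lambda : R) (xm xp : R -> R) (c : R) : R :=
  tau_plus g lambda xp c + tau_minus g lambda xm c.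

(* Main.v *)
Require Import Defs.
From Stdlib Require Import Reals Lra Psatz Classical ClassicalEpsilon Ranalysis5.
From Coquelicot Require Import Coquelicot.
Open Scope R_scope.

Record GH (g : R -> R) : Prop := {
  gcont : forall x, continuous g x;
  g00 : g 0 = 0;
  gsign : forall x, x <> 0 -> g x * x > 0 }.

Lemma gpos g (H : GH g) x : 0 < x -> 0 < g x.
Proof. intros Hx. pose proof (gsign g H x ltac:(lra)). nra. Qed.
Lemma gneg g (H : GH g) x : x < 0 -> g x < 0.
Proof. intros Hx. pose proof (gsign g H x ltac:(lra)). nra. Qed.

Lemma exg g (H : GH g) a b : ex_RInt g a b.
Proof. apply (ex_RInt_continuous (V:=R_CompleteNormedModule)). intros; apply (gcont g H). Qed.

Lemma G_deriv g (H : GH g) x : is_derive (Gprim g) x (g x).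
Proof.
  apply (is_derive_RInt g (Gprim g) 0 x).
  - apply filter_forall. intros b. apply (RInt_correct (V:=R_CompleteNormedModule)), exg, H.
  - apply (gcont g H).
Qed.

Lemma G_cont g (H : GH g) x : continuous (Gprim g) x.
Proof. apply (ex_derive_continuous (K:=R_AbsRing) (V:=R_NormedModule)). eexists. apply G_deriv, H. Qed.

Lemma G_0 g : Gprim g 0 = 0.
Proof. unfold Gprim. rewrite RInt_point. reflexivity. Qed.

Lemma G_diff g (H : GH g) x y : Gprim g y - Gprim g x = RInt g x y.
Proof.
  unfold Gprim. rewrite <- (RInt_Chasles g 0 x y) by (apply exg, H).
  change (plus ?a ?b) with (a + b). ring.
Qed.

Lemma G_incr g (H : GH g) x y : 0 <= x < y -> Gprim g x < Gprim g y.
Proof.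
  intros Hxy. cut (0 < Gprim g y - Gprim g x). lra.
  rewrite G_diff by exact H. apply RInt_gt_0. lra.
  - intros t Ht. apply (gpos g H). lra.
  - intros; apply (gcont g H).
Qed.

Lemma G_decr g (H : GH g) x y : x < y <= 0 -> Gprim g y < Gprim g x.
Proof.
  intros Hxy. cut (Gprim g y - Gprim g x < 0). lra.
  rewrite G_diff by exact H.
  apply Rlt_le_trans with (RInt (fun _ => 0) x y).
  - apply RInt_lt. lra.
    + intros; apply continuous_const.
    + intros; apply (gcont g H).
    + intros t Ht. apply (gneg g H). lra.
  - rewrite RInt_const. change (scal ?a ?b) with (a * b). lra.
Qed.

Lemma G_pos g (H : GH g) x : x <> 0 -> 0 < Gprim g x.
Proof.
  intros Hx. rewrite <- (G_0 g). destruct (Rlt_dec 0 x).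
  - apply G_incr; auto; lra.
  - apply G_decr; auto; lra.
Qed.

Lemma G_nonneg g (H : GH g) x : 0 <= Gprim g x.
Proof. destruct (Req_dec x 0). subst; rewrite G_0; lra. left; apply G_pos; auto. Qed.

Lemma G_le_pos g (H : GH g) x y : 0 <= x -> 0 <= y -> Gprim g x <= Gprim g y -> x <= y.
Proof. intros. destruct (Rle_dec x y). auto. pose proof (G_incr g H y x). lra. Qed.
Lemma G_lt_pos g (H : GH g) x y : 0 <= x -> 0 <= y -> Gprim g x < Gprim g y -> x < y.
Proof. intros. destruct (Rlt_dec x y). auto. destruct (Req_dec x y). subst; lra.
  pose proof (G_incr g H y x). lra. Qed.
Lemma G_le_neg g (H : GH g) x y : x <= 0 -> y <= 0 -> Gprim g x <= Gprim g y -> y <= x.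
Proof. intros. destruct (Rle_dec y x). auto. pose proof (G_decr g H x y). lra. Qed.
Lemma G_lt_neg g (H : GH g) x y : x <= 0 -> y <= 0 -> Gprim g x < Gprim g y -> y < x.
Proof. intros. destruct (Rlt_dec y x). auto. destruct (Req_dec x y). subst; lra.
  pose proof (G_decr g H x y). lra. Qed.

Lemma G_side g (H : GH g) a t : a <> 0 -> 0 <= t < 1 -> Gprim g (a * t) < Gprim g a.
Proof.
  intros Ha Ht. destruct (Rlt_dec 0 a).
  - apply G_incr; auto. split; nra.
  - apply G_decr; auto. split; nra.
Qed.

Lemma G_bound g (H : GH g) M x : (forall y, y <= 0 -> Rabs (g y) <= M) -> x <= 0 ->
  Gprim g x <= M * (- x).
Proof.
  intros HM Hx. unfold Gprim.
  assert (E : RInt g 0 x = - RInt g x 0).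
  { assert (E := G_diff g H x 0). rewrite G_0 in E. unfold Gprim in E. lra. }
  rewrite E. pose proof (abs_RInt_le_const g x 0 M Hx (exg g H x 0)) as B.
  assert (forall t, x <= t <= 0 -> Rabs (g t) <= M) by (intros; apply HM; lra).
  specialize (B H0). pose proof (Rle_abs (- RInt g x 0)). rewrite Rabs_Ropp in H1. lra.
Qed.

Lemma cont1_intro (f : R -> R) x :
  (forall eps, 0 < eps -> exists d, 0 < d /\ forall y, Rabs (y - x) < d -> Rabs (f y - f x) < eps) ->
  continuous f x.
Proof.
  intros Hc. apply continuity_pt_filterlim. intros eps Heps.
  destruct (Hc eps Heps) as [d [Hd Hy]]. exists d. split; auto.
  intros y [_ Hy']. apply Hy. exact Hy'.
Qed.

Lemma cont1_elim (f : R -> R) x : continuous f x ->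
  forall eps, 0 < eps -> exists d, 0 < d /\ forall y, Rabs (y - x) < d -> Rabs (f y - f x) < eps.
Proof.
  intros Hc. apply continuity_pt_filterlim in Hc. intros eps Heps.
  destruct (Hc eps Heps) as [d [Hd Hy]]. exists d. split; auto.
  intros y Hy'. destruct (Req_dec y x) as [->|Hne].
  rewrite Rminus_diag, Rabs_R0; auto.
  apply Hy. split. split. constructor. auto. exact Hy'.
Qed.

Definition cont2 (F : R -> R -> R) x y := forall eps, 0 < eps -> exists d, 0 < d /\
  forall u v, Rabs (u - x) < d -> Rabs (v - y) < d -> Rabs (F u v - F x y) < eps.

Lemma cont2_of_continuous (F : R -> R -> R) x y :
  continuous (fun p : R * R => F (fst p) (snd p)) (x, y) -> cont2 F x y.
Proof.
  intros Hc eps Heps.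
  assert (Hl : locally (F x y) (fun z : R => Rabs (z - F x y) < eps)).
  { exists (mkposreal eps Heps). intros z Hz. exact Hz. }
  specialize (Hc _ Hl). destruct Hc as [d Hd].
  exists d. split. apply cond_pos. intros u v Hu Hv.
  apply (Hd (u, v)). split; assumption.
Qed.

Lemma cont2_cont1 F x y : cont2 F x y -> continuous (F x) y.
Proof.
  intros Hc. apply cont1_intro. intros eps Heps. destruct (Hc eps Heps) as [d [Hd Hu]].
  exists d. split; auto. intros v Hv. apply Hu; auto. rewrite Rminus_diag, Rabs_R0. auto.
Qed.

Lemma V_cont (a0 y0 : R) : 0 < a0 * y0 ->
  continuous (fun p : R * R => 2 * fst p / sqrt (fst p * snd p)) (a0, y0).
Proof.
  intros Hp. unfold Rdiv.
  apply (continuous_mult (fun p : R*R => 2 * fst p) (fun p : R*R => / sqrt (fst p * snd p))).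
  - apply (continuous_mult (fun _ : R*R => 2) (fun p : R*R => fst p)).
    apply continuous_const. apply continuous_fst.
  - apply (continuous_comp (fun p : R*R => sqrt (fst p * snd p)) Rinv).
    + apply (continuous_comp (fun p : R*R => fst p * snd p) sqrt).
      * apply (continuous_mult (fun p : R*R => fst p) (fun p : R*R => snd p)).
        apply continuous_fst. apply continuous_snd.
      * apply continuous_sqrt.
    + apply continuous_Rinv. simpl. apply Rgt_not_eq, sqrt_lt_R0. exact Hp.
Qed.

Definition clamp s := Rmax 0 (Rmin s 1).

Lemma clamp_range s : 0 <= clamp s <= 1.
Proof. unfold clamp, Rmax, Rmin. repeat destruct Rle_dec; lra. Qed.
Lemma clamp_id s : 0 <= s <= 1 -> clamp s = s.
Proof. unfold clamp, Rmax, Rmin. repeat destruct Rle_dec; lra. Qed.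
Lemma clamp_lip s s' : Rabs (clamp s - clamp s') <= Rabs (s - s').
Proof. unfold clamp, Rmax, Rmin. repeat destruct Rle_dec; unfold Rabs; repeat destruct Rcase_abs; lra. Qed.
Lemma clamp_pos s : 0 < s -> 0 < clamp s.
Proof. unfold clamp, Rmax, Rmin. repeat destruct Rle_dec; lra. Qed.
Lemma clamp_small s : clamp s <= Rabs s.
Proof. unfold clamp, Rmax, Rmin. repeat destruct Rle_dec; unfold Rabs; repeat destruct Rcase_abs; lra. Qed.

Definition Rt g a t := 2 * a * t / sqrt (Gprim g a - Gprim g (a * (1 - t * t))).

Definition Qf g a s :=
  let t := clamp s in
  if Rle_dec t 0 then 2 * a / sqrt (a * g a) else Rt g a t.

Lemma Q_mvt g (H : GH g) a s : a <> 0 ->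
  exists eta, Rabs (eta - a) <= Rabs a * (clamp s * clamp s) /\ Qf g a s = 2 * a / sqrt (a * g eta).
Proof.
  intros Ha. unfold Qf. pose proof (clamp_range s) as Hr. set (t := clamp s) in *.
  destruct (Rle_dec t 0) as [Ht|Ht].
  { exists a. split; auto. rewrite Rminus_diag, Rabs_R0. apply Rmult_le_pos. apply Rabs_pos. nra. }
  apply Rnot_le_lt in Ht. assert (Ht1 : 0 <= 1 - t * t < 1) by nra.
  destruct (MVT_gen (Gprim g) (a * (1 - t * t)) a g) as [c [Hc E]].
  { intros; apply (G_deriv g H). }
  { intros; apply continuity_pt_filterlim, (G_cont g H). }
  assert (Hac : 0 <= a * g c).
  { destruct (Req_dec c 0) as [->|Hc0]. rewrite (g00 g H). lra.
    pose proof (gsign g H c Hc0).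
    destruct (Rlt_dec 0 a).
    - rewrite Rmin_left in Hc by nra. assert (0 <= c) by (destruct Hc; nra). assert (0 < c) by (destruct (Rle_lt_or_eq_dec 0 c); auto; congruence).
      pose proof (gpos g H c H2). nra.
    - rewrite Rmin_right, Rmax_left in Hc by nra. assert (c <= 0) by (destruct Hc; nra). assert (c < 0) by (destruct (Rle_lt_or_eq_dec c 0); auto; congruence).
      pose proof (gneg g H c H2). nra. }
  exists c. split.
  - destruct (Rlt_dec 0 a).
    + rewrite Rmin_left, Rmax_right in Hc by nra. rewrite Rabs_left1 by lra. rewrite Rabs_right by lra. nra.
    + rewrite Rmin_right, Rmax_left in Hc by nra. rewrite Rabs_right by lra. rewrite Rabs_left1 by lra. nra.
  - unfold Rt. rewrite E.
    replace (g c * (a - a * (1 - t * t))) with ((a * g c) * (t * t)) by ring.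
    rewrite sqrt_mult by nra. rewrite sqrt_square by lra.
    destruct (Req_dec (a * g c) 0) as [Z|Z].
    + rewrite Z, sqrt_0. unfold Rdiv. rewrite Rmult_0_l, !Rinv_0. ring.
    + assert (0 < sqrt (a * g c)) by (apply sqrt_lt_R0; lra). field. lra.
Qed.

Lemma Rt_cont g (H : GH g) a0 t0 : a0 <> 0 -> 0 < t0 <= 1 -> cont2 (Rt g) a0 t0.
Proof.
  intros Ha Ht. apply cont2_of_continuous. unfold Rt, Rdiv.
  assert (HD : 0 < Gprim g a0 - Gprim g (a0 * (1 - t0 * t0))).
  { pose proof (G_side g H a0 (1 - t0 * t0) Ha ltac:(nra)). lra. }
  apply (continuous_mult (fun p : R*R => 2 * fst p * snd p)
                         (fun p : R*R => / sqrt (Gprim g (fst p) - Gprim g (fst p * (1 - snd p * snd p))))).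
  - apply (continuous_mult (fun p : R*R => 2 * fst p) (fun p : R*R => snd p)).
    apply (continuous_mult (fun _ : R*R => 2) (fun p : R*R => fst p)).
    apply continuous_const. apply continuous_fst. apply continuous_snd.
  - apply (continuous_comp (fun p : R*R => sqrt (Gprim g (fst p) - Gprim g (fst p * (1 - snd p * snd p)))) Rinv).
    + apply (continuous_comp (fun p : R*R => Gprim g (fst p) - Gprim g (fst p * (1 - snd p * snd p))) sqrt).
      * apply (continuous_minus (fun p : R*R => Gprim g (fst p)) (fun p : R*R => Gprim g (fst p * (1 - snd p * snd p)))).
        -- apply (continuous_comp (fun p : R*R => fst p) (Gprim g)). apply continuous_fst. apply (G_cont g H).
        -- apply (continuous_comp (fun p : R*R => fst p * (1 - snd p * snd p)) (Gprim g)).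
           ++ apply (continuous_mult (fun p : R*R => fst p) (fun p : R*R => 1 - snd p * snd p)).
              apply continuous_fst.
              apply (continuous_minus (fun _ : R*R => 1) (fun p : R*R => snd p * snd p)).
              apply continuous_const.
              apply (continuous_mult (fun p : R*R => snd p) (fun p : R*R => snd p)); apply continuous_snd.
           ++ apply (G_cont g H).
      * apply continuous_sqrt.
    + apply continuous_Rinv. simpl. apply Rgt_not_eq, sqrt_lt_R0. exact HD.
Qed.

Lemma clamp_le_max s : clamp s <= Rmax 0 s.
Proof. unfold clamp, Rmax, Rmin. repeat destruct Rle_dec; lra. Qed.

Lemma Q_cont g (H : GH g) a0 s0 : a0 <> 0 -> cont2 (Qf g) a0 s0.
Proof.
  intros Ha0. destruct (Rle_dec s0 0) as [Hs0|Hs0].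
  -
    assert (Hq0 : Qf g a0 s0 = 2 * a0 / sqrt (a0 * g a0)).
    { unfold Qf. assert (clamp s0 = 0) as -> by (unfold clamp, Rmax, Rmin; repeat destruct Rle_dec; lra).
      destruct Rle_dec; lra. }
    intros eps Heps.
    assert (Hpos : 0 < a0 * g a0) by (pose proof (gsign g H a0 Ha0); lra).
    destruct (cont2_of_continuous (fun a y => 2 * a / sqrt (a * y)) a0 (g a0) (V_cont a0 (g a0) Hpos) eps Heps) as [d1 [Hd1 HV]].
    destruct (cont1_elim g a0 (gcont g H a0) d1 Hd1) as [d2 [Hd2 Hg]].
    set (K := Rabs a0 + 1).
    assert (HK : 0 < K) by (unfold K; pose proof (Rabs_pos a0); lra).
    set (d := Rmin (Rmin d1 (d2 / 2)) (Rmin (Rmin 1 (Rabs a0)) (d2 / (2 * K)))).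
    assert (Ha0' : 0 < Rabs a0) by (apply Rabs_pos_lt; auto).
    assert (Hd : 0 < d).
    { unfold d. repeat apply Rmin_pos; try lra. apply Rdiv_lt_0_compat; lra. }
    exists d. split; auto. intros u v Hu Hv.
    assert (Hdd : d <= d1 /\ d <= d2 / 2 /\ d <= 1 /\ d <= Rabs a0 /\ d <= d2 / (2 * K)).
    { unfold d.
      pose proof (Rmin_l (Rmin d1 (d2 / 2)) (Rmin (Rmin 1 (Rabs a0)) (d2 / (2 * K)))).
      pose proof (Rmin_r (Rmin d1 (d2 / 2)) (Rmin (Rmin 1 (Rabs a0)) (d2 / (2 * K)))).
      pose proof (Rmin_l d1 (d2 / 2)). pose proof (Rmin_r d1 (d2 / 2)).
      pose proof (Rmin_l (Rmin 1 (Rabs a0)) (d2 / (2 * K))). pose proof (Rmin_r (Rmin 1 (Rabs a0)) (d2 / (2 * K))).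
      pose proof (Rmin_l 1 (Rabs a0)). pose proof (Rmin_r 1 (Rabs a0)). lra. }
    destruct Hdd as [D1 [D2 [D3 [D4 D5]]]].
    assert (Hu0 : u <> 0).
    { intros ->. rewrite Rminus_0_l, Rabs_Ropp in Hu. lra. }
    destruct (Q_mvt g H u v Hu0) as [eta [Heta EQ]].
    rewrite EQ, Hq0.
    apply (HV u (g eta)). lra.
    apply Hg.
    assert (Hc : clamp v <= d).
    { pose proof (clamp_le_max v). unfold Rmax in H0. destruct Rle_dec.
      apply Rabs_def2 in Hv. lra. lra. }
    pose proof (clamp_range v).
    assert (Hc2 : clamp v * clamp v <= d2 / (2 * K)) by nra.
    assert (HuK : Rabs u <= K).
    { unfold K. replace u with ((u - a0) + a0) by ring.
      pose proof (Rabs_triang (u - a0) a0). lra. }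
    assert (Hm : Rabs u * (clamp v * clamp v) <= K * (d2 / (2 * K))).
    { apply Rmult_le_compat; try lra. apply Rabs_pos. nra. }
    replace (K * (d2 / (2 * K))) with (d2 / 2) in Hm by (field; lra).
    replace (eta - a0) with ((eta - u) + (u - a0)) by ring.
    pose proof (Rabs_triang (eta - u) (u - a0)). lra.
  -
    apply Rnot_le_lt in Hs0.
    pose proof (clamp_range s0). pose proof (clamp_pos s0 Hs0).
    intros eps Heps.
    destruct (Rt_cont g H a0 (clamp s0) Ha0 ltac:(lra) eps Heps) as [d [Hd HR]].
    exists (Rmin d s0). split. apply Rmin_pos; lra.
    intros u v Hu Hv.
    pose proof (Rmin_l d s0). pose proof (Rmin_r d s0).
    assert (Hv0 : 0 < v) by (apply Rabs_def2 in Hv; lra).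
    unfold Qf. pose proof (clamp_pos v Hv0).
    destruct (Rle_dec (clamp v) 0); [lra|]. destruct (Rle_dec (clamp s0) 0); [lra|].
    apply HR. lra. pose proof (clamp_lip v s0). lra.
Qed.

Lemma exRInt_R (f : R -> R) a b : (forall z, Rmin a b <= z <= Rmax a b -> continuous f z) -> ex_RInt f a b.
Proof. intros. apply (ex_RInt_continuous (V:=R_CompleteNormedModule)). auto. Qed.

Lemma param_cont (Q : R -> R -> R) p0 r : 0 < r ->
  (forall p s, Rabs (p - p0) < r -> cont2 Q p s) ->
  continuous (fun p => RInt (Q p) 0 1) p0.
Proof.
  intros Hr HQ. apply cont1_intro. intros eps Heps.
  assert (Hd : forall s, exists d : posreal, forall u v, Rabs (u - p0) < d -> Rabs (v - s) < d ->
                 Rabs (Q u v - Q p0 s) < eps / 4).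
  { intros s. assert (Hp : Rabs (p0 - p0) < r) by (rewrite Rminus_diag, Rabs_R0; lra).
    destruct (HQ p0 s Hp (eps / 4) ltac:(lra)) as [d [Hd H']].
    exists (mkposreal d Hd). exact H'. }
  set (delta := fun s => proj1_sig (constructive_indefinite_description _ (Hd s))).
  assert (Hdelta : forall s u v, Rabs (u - p0) < delta s -> Rabs (v - s) < delta s ->
                 Rabs (Q u v - Q p0 s) < eps / 4).
  { intros s. unfold delta. destruct (constructive_indefinite_description _ (Hd s)) as [x Hx]. exact Hx. }
  destruct (compactness_value_1d 0 1 delta) as [d Hcd].
  exists (Rmin d r). split. apply Rmin_pos. apply cond_pos. lra.
  intros y Hy. pose proof (Rmin_l d r). pose proof (Rmin_r d r).
  assert (Hpt : forall s, 0 <= s <= 1 -> Rabs (Q y s - Q p0 s) <= eps / 2).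
  { intros s Hs. apply NNPP. intros Hn. apply (Hcd s Hs). intros [t [Ht [Hst Hdt]]].
    apply Hn. 
    assert (A1 : Rabs (Q y s - Q p0 t) < eps / 4) by (apply Hdelta; lra).
    assert (A2 : Rabs (Q p0 s - Q p0 t) < eps / 4) by (apply Hdelta; [rewrite Rminus_diag, Rabs_R0; apply cond_pos | lra]).
    replace (Q y s - Q p0 s) with ((Q y s - Q p0 t) - (Q p0 s - Q p0 t)) by ring.
    pose proof (Rabs_triang (Q y s - Q p0 t) (- (Q p0 s - Q p0 t))). rewrite Rabs_Ropp in H1.
    unfold Rminus at 1. lra. }
  assert (Ey : ex_RInt (Q y) 0 1).
  { apply exRInt_R. intros. apply cont2_cont1. apply HQ. lra. }
  assert (E0 : ex_RInt (Q p0) 0 1).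
  { apply exRInt_R. intros. apply cont2_cont1. apply HQ. rewrite Rminus_diag, Rabs_R0; lra. }
  assert (EQ : RInt (Q y) 0 1 - RInt (Q p0) 0 1 = RInt (fun s => Q y s - Q p0 s) 0 1).
  { symmetry. apply (RInt_minus (V:=R_CompleteNormedModule)); auto. }
  rewrite EQ.
  apply Rle_lt_trans with ((1 - 0) * (eps / 2)).
  apply abs_RInt_le_const. lra.
  apply (ex_RInt_minus (V:=R_NormedModule)); auto.
  auto. lra.
Qed.

Lemma Qa_cont g (H : GH g) a s : a <> 0 -> continuous (Qf g a) s.
Proof. intros. apply cont2_cont1, Q_cont; auto. Qed.

Lemma integrand_cont g (H : GH g) c x : 0 < c - Gprim g x -> continuous (integrand g c) x.
Proof.
  intros Hx. unfold integrand, Rdiv.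
  apply (continuous_mult (fun _ : R => 1) (fun x => / sqrt (c - Gprim g x))).
  apply continuous_const.
  apply continuous_Rinv_comp.
  apply continuous_sqrt_comp.
  apply (continuous_minus (fun _ : R => c) (Gprim g)). apply continuous_const. apply (G_cont g H).
  apply Rgt_not_eq, sqrt_lt_R0. exact Hx.
Qed.

Lemma inside g (H : GH g) a t z : a <> 0 -> 0 <= t < 1 -> Rmin 0 (a * t) <= z <= Rmax 0 (a * t) ->
  0 < Gprim g a - Gprim g z.
Proof.
  intros Ha Ht Hz.
  assert (Ez : z = a * (z / a)) by (field; auto).
  assert (Hzt : 0 <= z / a < 1).
  { destruct (Rlt_dec 0 a).
    - rewrite Rmin_left, Rmax_right in Hz by nra.
      split. apply Rdiv_le_0_compat; lra.
      apply (Rmult_lt_reg_l a). auto. rewrite <- Ez. nra.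
    - assert (a < 0) by (destruct (Rle_lt_or_eq_dec a 0); [lra|auto|congruence]).
      rewrite Rmin_right, Rmax_left in Hz by nra.
      split.
      + unfold Rdiv. replace (z * / a) with ((- z) * / (- a)) by (field; auto).
        apply Rmult_le_pos. lra. left. apply Rinv_0_lt_compat. lra.
      + apply (Rmult_lt_reg_l (- a)). lra. replace (- a * (z / a)) with (- z) by (field; auto). nra. }
  rewrite Ez. pose proof (G_side g H a (z / a) Ha Hzt). lra.
Qed.

Lemma subst g (H : GH g) a u : a <> 0 -> 0 < u <= 1 ->
  is_RInt (integrand g (Gprim g a)) 0 (a * (1 - u * u)) (RInt (Qf g a) u 1).
Proof.
  intros Ha Hu. set (c := Gprim g a). set (f := integrand g c).
  assert (Hcomp := is_RInt_comp f (fun s => a * (1 - s * s)) (fun s => - 2 * a * s) u 1).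
  rewrite Rmin_left, Rmax_right in Hcomp by lra.
  assert (C1 : forall x, u <= x <= 1 -> continuous f (a * (1 - x * x))).
  { intros x Hx. apply integrand_cont; auto. unfold c. pose proof (G_side g H a (1 - x * x) Ha ltac:(nra)). lra. }
  assert (C2 : forall x, u <= x <= 1 -> is_derive (fun s => a * (1 - s * s)) x (- 2 * a * x) /\ continuous (fun s => - 2 * a * s) x).
  { intros x Hx. split. auto_derive. auto. ring.
    apply (ex_derive_continuous (K:=R_AbsRing) (V:=R_NormedModule) (fun s => -2 * a * s)). auto_derive. auto. }
  specialize (Hcomp C1 C2). replace (a * (1 - 1 * 1)) with 0 in Hcomp by ring.
  assert (Hext : is_RInt (fun s => - Qf g a s) u 1 (RInt f (a * (1 - u * u)) 0)).
  { apply (is_RInt_ext (V:=R_NormedModule)) with (2 := Hcomp).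
    rewrite Rmin_left, Rmax_right by lra. intros x Hx.
    unfold Qf. rewrite clamp_id by lra. destruct (Rle_dec x 0). lra.
    unfold Rt, f, integrand, c. change (scal ?p ?q) with (p * q). match goal with |- ?A = ?B => change (@eq R A B) end. field.
    apply Rgt_not_eq, sqrt_lt_R0. pose proof (G_side g H a (1 - x * x) Ha ltac:(nra)). lra. }
  assert (Ef : ex_RInt f 0 (a * (1 - u * u))).
  { apply exRInt_R. intros z Hz. apply integrand_cont; auto. unfold c. apply (inside g H a (1 - u * u)); auto. nra. }
  assert (EQ : RInt (Qf g a) u 1 = RInt f 0 (a * (1 - u * u))).
  { apply (is_RInt_unique (V:=R_CompleteNormedModule)) in Hext.
    rewrite (RInt_opp (V:=R_CompleteNormedModule)) in Hext.
    rewrite <- (opp_RInt_swap (V:=R_CompleteNormedModule) f 0 (a * (1 - u * u))) in Hext by exact Ef.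
    change (opp ?x) with (- x) in Hext. lra.
    apply exRInt_R. intros; apply Qa_cont; auto. }
  rewrite EQ. apply (RInt_correct (V:=R_CompleteNormedModule)). exact Ef.
Qed.

Definition P g a := RInt (Qf g a) 0 1.

Lemma RInt_u_cont g (H : GH g) a : a <> 0 -> continuous (fun u => RInt (Qf g a) u 1) 0.
Proof.
  intros Ha.
  apply (continuous_comp_2 (fun u : R => u) (fun _ : R => 1) (fun x y => RInt (Qf g a) x y) 0).
  apply continuous_id. apply continuous_const.
  apply (continuous_RInt (V:=R_NormedModule) (Qf g a) 0 1 (fun x y => RInt (Qf g a) x y)).
  apply filter_forall. intros z. apply (RInt_correct (V:=R_CompleteNormedModule)).
  apply exRInt_R. intros; apply Qa_cont; auto.
Qed.

Lemma P_le g (H : GH g) a B : a <> 0 -> (forall u, 0 < u <= 1 -> RInt (Qf g a) u 1 <= B) -> P g a <= B.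
Proof.
  intros Ha Hb. apply Rnot_lt_le. intros Hlt.
  destruct (cont1_elim _ _ (RInt_u_cont g H a Ha) (P g a - B) ltac:(lra)) as [d [Hd Hc]].
  set (u := Rmin (d / 2) 1).
  assert (0 < u <= 1) by (unfold u; split; [apply Rmin_pos; lra | apply Rmin_r]).
  assert (u <= d / 2) by apply Rmin_l.
  specialize (Hc u ltac:(rewrite Rminus_0_r, Rabs_right; lra)). specialize (Hb u H0).
  unfold P in *. apply Rabs_def2 in Hc. lra.
Qed.

Lemma P_ge g (H : GH g) a B : a <> 0 -> (forall u, 0 < u <= 1 -> B <= RInt (Qf g a) u 1) -> B <= P g a.
Proof.
  intros Ha Hb. apply Rnot_lt_le. intros Hlt.
  destruct (cont1_elim _ _ (RInt_u_cont g H a Ha) (B - P g a) ltac:(lra)) as [d [Hd Hc]].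
  set (u := Rmin (d / 2) 1).
  assert (0 < u <= 1) by (unfold u; split; [apply Rmin_pos; lra | apply Rmin_r]).
  assert (u <= d / 2) by apply Rmin_l.
  specialize (Hc u ltac:(rewrite Rminus_0_r, Rabs_right; lra)). specialize (Hb u H0).
  unfold P in *. apply Rabs_def2 in Hc. lra.
Qed.

Lemma gen_left (f : R -> R) a l (F : R -> R) e : 0 < e ->
  (forall b, a - e < b < a -> is_RInt f 0 b (F b)) ->
  filterlim F (at_left a) (locally l) ->
  is_RInt_gen f (at_point 0) (at_left a) l.
Proof.
  intros He Hb HF P HP. unfold filtermapi.
  apply Filter_prod with (fun x => x = 0) (fun b => a - e < b < a /\ P (F b)).
  - reflexivity.
  - specialize (HF P HP). unfold filtermap, at_left, within in *.
    assert (Hl : locally a (fun b => a - e < b)).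
    { exists (mkposreal e He). intros y Hy. change (Rabs (y - a) < e) in Hy. apply Rabs_def2 in Hy. lra. }
    generalize (filter_and _ _ HF Hl). apply filter_imp. intros x [H1 H2] Hx. auto.
  - intros x y -> [Hy HPy]. exists (F y). split; auto.
Qed.

Lemma gen_right (f : R -> R) m l (F : R -> R) e : 0 < e ->
  (forall b, m < b < m + e -> is_RInt f b 0 (F b)) ->
  filterlim F (at_right m) (locally l) ->
  is_RInt_gen f (at_right m) (at_point 0) l.
Proof.
  intros He Hb HF P HP. unfold filtermapi.
  apply Filter_prod with (fun b => m < b < m + e /\ P (F b)) (fun x => x = 0).
  - specialize (HF P HP). unfold filtermap, at_right, within in *.
    assert (Hl : locally m (fun b => b < m + e)).
    { exists (mkposreal e He). intros y Hy. change (Rabs (y - m) < e) in Hy. apply Rabs_def2 in Hy. lra. }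
    generalize (filter_and _ _ HF Hl). apply filter_imp. intros x [H1 H2] Hx. auto.
  - reflexivity.
  - intros x y [Hx HPx] ->. exists (F x). split; auto.
Qed.

Lemma sigma_lim a : a <> 0 -> filterlim (fun b => sqrt (1 - b / a)) (locally a) (locally 0).
Proof.
  intros Ha.
  assert (Hc : continuous (fun b => sqrt (1 - b / a)) a).
  { apply continuous_sqrt_comp.
    apply (continuous_minus (fun _ : R => 1) (fun b => b / a)). apply continuous_const.
    unfold Rdiv. apply (continuous_mult (fun b : R => b) (fun _ : R => / a)).
    apply continuous_id. apply continuous_const. }
  unfold continuous in Hc. replace (sqrt (1 - a / a)) with 0 in Hc. exact Hc.
  replace (1 - a / a) with 0 by (field; auto). rewrite sqrt_0; auto.
Qed.

Lemma sigma_props a b : a <> 0 -> 0 <= b / a < 1 ->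
  0 < sqrt (1 - b / a) <= 1 /\ a * (1 - sqrt (1 - b / a) * sqrt (1 - b / a)) = b.
Proof.
  intros Ha Hb. split. split. apply sqrt_lt_R0. lra.
  apply Rle_trans with (sqrt 1). apply sqrt_le_1_alt; lra. rewrite sqrt_1; lra.
  rewrite sqrt_sqrt by lra. field. auto.
Qed.

Lemma tau_plus_gen g (H : GH g) a : 0 < a ->
  is_RInt_gen (integrand g (Gprim g a)) (at_point 0) (at_left a) (P g a).
Proof.
  intros Ha.
  apply gen_left with (F := fun b => RInt (Qf g a) (sqrt (1 - b / a)) 1) (e := a). auto.
  - intros b Hb. assert (Hba : 0 <= b / a < 1).
    { split. apply Rdiv_le_0_compat; lra. apply (Rmult_lt_reg_r a). auto. unfold Rdiv. rewrite Rmult_assoc, Rinv_l; lra. }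
    destruct (sigma_props a b ltac:(lra) Hba) as [Hu E].
    pattern b at 1. rewrite <- E. apply subst; auto. lra.
  - apply (filterlim_comp R R R (fun b => sqrt (1 - b / a)) (fun u => RInt (Qf g a) u 1) _ (locally 0)).
    apply (filterlim_filter_le_1 (F := locally a)). apply filter_le_within.
    apply sigma_lim; lra.
    apply (RInt_u_cont g H a). lra.
Qed.

Lemma tau_minus_gen g (H : GH g) m : m < 0 ->
  is_RInt_gen (integrand g (Gprim g m)) (at_right m) (at_point 0) (- P g m).
Proof.
  intros Hm.
  apply gen_right with (F := fun b => - RInt (Qf g m) (sqrt (1 - b / m)) 1) (e := - m). lra.
  - intros b Hb. assert (Hba : 0 <= b / m < 1).
    { split. unfold Rdiv. replace (b * / m) with ((- b) * / (- m)) by (field; lra).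
      apply Rmult_le_pos. lra. left. apply Rinv_0_lt_compat. lra.
      apply (Rmult_lt_reg_r (- m)). lra. replace (b / m * - m) with (- b) by (field; lra). lra. }
    destruct (sigma_props m b ltac:(lra) Hba) as [Hu E].
    assert (S := subst g H m (sqrt (1 - b / m)) ltac:(lra) Hu). rewrite E in S.
    apply (is_RInt_swap (V:=R_NormedModule)) in S. exact S.
  - apply (filterlim_comp R R R (fun b => sqrt (1 - b / m)) (fun u => - RInt (Qf g m) u 1) _ (locally 0)).
    apply (filterlim_filter_le_1 (F := locally m)). apply filter_le_within.
    apply sigma_lim; lra.
    apply (continuous_opp (fun u => RInt (Qf g m) u 1)).
    apply (RInt_u_cont g H m). lra.
Qed.

Lemma tau_plus_eq g (H : GH g) a : 0 < a ->
  RInt_gen (integrand g (Gprim g a)) (at_point 0) (at_left a) = P g a.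
Proof. intros. apply (is_RInt_gen_unique (V:=R_CompleteNormedModule)). apply tau_plus_gen; auto. Qed.

Lemma tau_minus_eq g (H : GH g) m : m < 0 ->
  RInt_gen (integrand g (Gprim g m)) (at_right m) (at_point 0) = - P g m.
Proof. intros. apply (is_RInt_gen_unique (V:=R_CompleteNormedModule)). apply tau_minus_gen; auto. Qed.

Lemma subst_eq g (H : GH g) a u : a <> 0 -> 0 < u <= 1 ->
  RInt (Qf g a) u 1 = RInt (integrand g (Gprim g a)) 0 (a * (1 - u * u)).
Proof. intros. symmetry. apply (is_RInt_unique (V:=R_CompleteNormedModule)). apply subst; auto. Qed.

Lemma div_nonneg x y : 0 <= x -> 0 <= y -> 0 <= x / y.
Proof.
  intros. destruct (Req_dec y 0) as [->|]. unfold Rdiv. rewrite Rinv_0. lra.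
  apply Rdiv_le_0_compat; lra.
Qed.

Lemma Q_sign g (H : GH g) a s : 0 <= a * Qf g a s.
Proof.
  unfold Qf. destruct Rle_dec.
  - unfold Rdiv. replace (a * (2 * a * / sqrt (a * g a))) with (2 * (a * a) * / sqrt (a * g a)) by ring.
    apply div_nonneg. nra. apply sqrt_pos.
  - unfold Rt, Rdiv. pose proof (clamp_range s).
    replace (a * (2 * a * clamp s * / sqrt (Gprim g a - Gprim g (a * (1 - clamp s * clamp s)))))
      with (2 * (a * a) * clamp s / sqrt (Gprim g a - Gprim g (a * (1 - clamp s * clamp s)))) by (unfold Rdiv; ring).
    apply div_nonneg. apply Rmult_le_pos; nra. apply sqrt_pos.
Qed.

Lemma f_lower g (H : GH g) c x y : x <= y -> (forall z, x <= z <= y -> 0 < c - Gprim g z) ->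
  (y - x) / sqrt c <= RInt (integrand g c) x y.
Proof.
  intros Hxy Hz.
  assert (Hc : 0 < c) by (pose proof (Hz x ltac:(lra)); pose proof (G_nonneg g H x); lra).
  replace ((y - x) / sqrt c) with (RInt (fun _ => 1 / sqrt c) x y).
  2:{ rewrite RInt_const. change (scal ?p ?q) with (p * q). match goal with |- ?A = ?B => change (@eq R A B) end. field. apply Rgt_not_eq, sqrt_lt_R0; lra. }
  apply RInt_le; auto.
  - apply exRInt_R. intros; apply continuous_const.
  - apply exRInt_R. intros z Hz'. rewrite Rmin_left, Rmax_right in Hz' by lra. apply integrand_cont; auto.
  - intros z Hz'. unfold integrand. specialize (Hz z ltac:(lra)). pose proof (G_nonneg g H z).
    unfold Rdiv. rewrite !Rmult_1_l. apply Rinv_le_contravar. apply sqrt_lt_R0; auto.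
    apply sqrt_le_1_alt. lra.
Qed.

Lemma P_lower_pos g (H : GH g) a : 0 < a -> (3 / 4 * a) / sqrt (Gprim g a) <= P g a.
Proof.
  intros Ha. unfold P.
  assert (E1 : ex_RInt (Qf g a) 0 (1/2)) by (apply exRInt_R; intros; apply (Qa_cont g H); lra).
  assert (E2 : ex_RInt (Qf g a) (1/2) 1) by (apply exRInt_R; intros; apply (Qa_cont g H); lra).
  rewrite <- (RInt_Chasles (V:=R_CompleteNormedModule) (Qf g a) 0 (1/2) 1 E1 E2).
  change (plus ?p ?q) with (p + q).
  assert (0 <= RInt (Qf g a) 0 (1/2)).
  { apply RInt_ge_0; auto. lra. intros x _. pose proof (Q_sign g H a x).
    apply Rnot_lt_le. intros Hn. nra. }
  rewrite (subst_eq g H a (1/2)) by lra.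
  pose proof (f_lower g H (Gprim g a) 0 (a * (1 - 1/2 * (1/2)))).
  replace (a * (1 - 1/2 * (1/2)) - 0) with (3/4 * a) in H1 by field.
  enough ((3/4 * a) / sqrt (Gprim g a) <= RInt (integrand g (Gprim g a)) 0 (a * (1 - 1 / 2 * (1 / 2)))) by lra.
  apply H1. nra.
  intros z Hz. apply (inside g H a (1 - 1/2 * (1/2))). lra. lra.
  rewrite Rmin_left, Rmax_right; nra.
Qed.

Lemma P_lower_neg g (H : GH g) m : m < 0 -> (3 / 4 * (- m)) / sqrt (Gprim g m) <= - P g m.
Proof.
  intros Hm. unfold P.
  assert (E1 : ex_RInt (Qf g m) 0 (1/2)) by (apply exRInt_R; intros; apply (Qa_cont g H); lra).
  assert (E2 : ex_RInt (Qf g m) (1/2) 1) by (apply exRInt_R; intros; apply (Qa_cont g H); lra).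
  rewrite <- (RInt_Chasles (V:=R_CompleteNormedModule) (Qf g m) 0 (1/2) 1 E1 E2).
  change (plus ?p ?q) with (p + q).
  assert (RInt (Qf g m) 0 (1/2) <= 0).
  { assert (0 <= RInt (fun s => - Qf g m s) 0 (1/2)).
    { apply RInt_ge_0; auto. lra. apply (ex_RInt_opp (V:=R_NormedModule)). auto.
      intros x _. pose proof (Q_sign g H m x). nra. }
    rewrite (RInt_opp (V:=R_CompleteNormedModule)) in H0 by auto. change (opp ?x) with (- x) in H0. lra. }
  rewrite (subst_eq g H m (1/2)) by lra.
  set (b := m * (1 - 1/2 * (1/2))).
  assert (Eb : ex_RInt (integrand g (Gprim g m)) b 0).
  { apply exRInt_R. intros z Hz. apply integrand_cont; auto. apply (inside g H m (1 - 1/2 * (1/2))). lra. lra.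
    unfold b in Hz. rewrite Rmin_left, Rmax_right in Hz by lra. rewrite Rmin_right, Rmax_left by lra. lra. }
  rewrite <- (opp_RInt_swap (V:=R_CompleteNormedModule) _ b 0 Eb). change (opp ?x) with (- x).
  pose proof (f_lower g H (Gprim g m) b 0).
  replace (0 - b) with (3/4 * - m) in H1 by (unfold b; field).
  enough ((3/4 * - m) / sqrt (Gprim g m) <= RInt (integrand g (Gprim g m)) b 0) by lra.
  apply H1. unfold b; nra.
  intros z Hz. apply (inside g H m (1 - 1/2 * (1/2))). lra. lra.
  unfold b in Hz. rewrite Rmin_right, Rmax_left; lra.
Qed.

Definition Dpr g c al z :=
  let w := sqrt (c - Gprim g z) in (w + z * g z / (2 * w)) / (w * w + al * al * (z * z)).

Lemma psi_deriv g (H : GH g) c al z : 0 < al -> 0 < c - Gprim g z ->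
  is_derive (fun z => atan (al * z / sqrt (c - Gprim g z)) / al) z (Dpr g c al z).
Proof.
  intros Hal Hz.
  auto_derive.
  - repeat split. exists (g z). apply G_deriv; auto. lra.
    apply Rgt_not_eq, sqrt_lt_R0. lra.
  - replace (Derive (fun x : R => Gprim g x) z) with (g z) by (symmetry; apply is_derive_unique; apply G_deriv; auto).
    unfold Dpr. replace (c + - Gprim g z) with (c - Gprim g z) by ring.
    assert (Hw : 0 < sqrt (c - Gprim g z)) by (apply sqrt_lt_R0; lra).
    set (w := sqrt (c - Gprim g z)) in *.
    assert (0 < w * w + al * al * (z * z)) by nra.
    assert (0 < 1 + al * z * / w * (al * z * / w * 1)).
    { assert (0 <= al * z * / w * (al * z * / w)) by nra. lra. }
    field. lra.
Qed.

Lemma w_cont g (H : GH g) c z : continuous (fun z => sqrt (c - Gprim g z)) z.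
Proof.
  apply continuous_sqrt_comp.
  apply (continuous_minus (fun _ : R => c) (Gprim g)). apply continuous_const. apply (G_cont g H).
Qed.

Lemma Dpr_cont g (H : GH g) c al z : 0 < c - Gprim g z -> continuous (Dpr g c al) z.
Proof.
  intros Hz. unfold Dpr. cbv zeta. unfold Rdiv.
  assert (Hw : 0 < sqrt (c - Gprim g z)) by (apply sqrt_lt_R0; lra).
  apply (continuous_mult (fun z => sqrt (c - Gprim g z) + z * g z * / (2 * sqrt (c - Gprim g z)))
                         (fun z => / (sqrt (c - Gprim g z) * sqrt (c - Gprim g z) + al * al * (z * z)))).
  - apply (continuous_plus (fun z => sqrt (c - Gprim g z)) (fun z => z * g z * / (2 * sqrt (c - Gprim g z)))).
    apply w_cont; auto.
    apply (continuous_mult (fun z => z * g z) (fun z => / (2 * sqrt (c - Gprim g z)))).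
    apply (continuous_mult (fun z : R => z) g). apply continuous_id. apply (gcont g H).
    apply continuous_Rinv_comp.
    apply (continuous_mult (fun _ : R => 2) (fun z => sqrt (c - Gprim g z))). apply continuous_const. apply w_cont; auto.
    lra.
  - apply continuous_Rinv_comp.
    apply (continuous_plus (fun z => sqrt (c - Gprim g z) * sqrt (c - Gprim g z)) (fun z => al * al * (z * z))).
    apply (continuous_mult (fun z => sqrt (c - Gprim g z)) (fun z => sqrt (c - Gprim g z))); apply w_cont; auto.
    apply (continuous_mult (fun _ : R => al * al) (fun z : R => z * z)). apply continuous_const.
    apply (continuous_mult (fun z : R => z) (fun z : R => z)); apply continuous_id.
    nra.
Qed.

Lemma prufer g (H : GH g) c k x y : 0 < k -> x <= y ->
  (forall z, x <= z <= y -> 0 < c - Gprim g z /\ k * (z * z) <= z * g z) ->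
  RInt (integrand g c) x y <=
  (atan (sqrt (k / 2) * y / sqrt (c - Gprim g y)) - atan (sqrt (k / 2) * x / sqrt (c - Gprim g x))) / sqrt (k / 2).
Proof.
  intros Hk Hxy Hz. set (al := sqrt (k / 2)).
  assert (Hal : 0 < al) by (apply sqrt_lt_R0; lra).
  assert (Hal2 : al * al = k / 2) by (apply sqrt_sqrt; lra).
  assert (HI : is_RInt (Dpr g c al) x y
     (minus (atan (al * y / sqrt (c - Gprim g y)) / al) (atan (al * x / sqrt (c - Gprim g x)) / al))).
  { apply (is_RInt_derive (V:=R_CompleteNormedModule) (fun z => atan (al * z / sqrt (c - Gprim g z)) / al)).
    - intros z Hz'. rewrite Rmin_left, Rmax_right in Hz' by lra. apply psi_deriv; auto. apply Hz; auto.
    - intros z Hz'. rewrite Rmin_left, Rmax_right in Hz' by lra. apply Dpr_cont; auto. apply Hz; auto. }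
  apply (is_RInt_unique (V:=R_CompleteNormedModule)) in HI.
  change (minus ?p ?q) with (p - q) in HI.
  replace ((atan (al * y / sqrt (c - Gprim g y)) - atan (al * x / sqrt (c - Gprim g x))) / al)
    with (RInt (Dpr g c al) x y) by (rewrite HI; match goal with |- ?A = ?B => change (@eq R A B) end; field; lra).
  apply RInt_le; auto.
  - apply exRInt_R. intros z Hz'. rewrite Rmin_left, Rmax_right in Hz' by lra. apply integrand_cont; auto. apply Hz; auto.
  - apply exRInt_R. intros z Hz'. rewrite Rmin_left, Rmax_right in Hz' by lra. apply Dpr_cont; auto. apply Hz; auto.
  - intros z Hz'. destruct (Hz z ltac:(lra)) as [Hc Hkz].
    unfold integrand, Dpr. cbv zeta.
    assert (Hw : 0 < sqrt (c - Gprim g z)) by (apply sqrt_lt_R0; lra).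
    set (w := sqrt (c - Gprim g z)) in *.
    assert (Hd : 0 < w * w + al * al * (z * z)) by nra.
    apply Rmult_le_reg_r with (w * (w * w + al * al * (z * z))). nra.
    replace (1 / w * (w * (w * w + al * al * (z * z)))) with (w * w + al * al * (z * z)) by (field; lra).
    replace ((w + z * g z / (2 * w)) / (w * w + al * al * (z * z)) * (w * (w * w + al * al * (z * z))))
      with (w * w + z * g z / 2) by (field; lra).
    rewrite Hal2. lra.
Qed.

Lemma P_upper_pos g (H : GH g) k a : 0 < k -> 0 < a ->
  (forall z, 0 <= z <= a -> k * (z * z) <= z * g z) -> P g a <= (PI / 2) / sqrt (k / 2).
Proof.
  intros Hk Ha Hz. assert (Hal : 0 < sqrt (k / 2)) by (apply sqrt_lt_R0; lra).
  apply P_le; auto. lra. intros u Hu.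
  rewrite (subst_eq g H a u) by lra.
  assert (Hb : 0 <= 1 - u * u < 1) by nra.
  assert (Hb2 : 0 <= a * (1 - u * u) < a) by nra.
  eapply Rle_trans. apply (prufer g H (Gprim g a) k 0 (a * (1 - u * u))); auto. lra.
  - intros z Hz'. split. apply (inside g H a (1 - u * u)); auto. lra.
    rewrite Rmin_left, Rmax_right; lra. apply Hz; lra.
  - rewrite Rmult_0_r, Rdiv_0_l, atan_0, Rminus_0_r.
    apply Rmult_le_compat_r. left; apply Rinv_0_lt_compat; auto.
    destruct (atan_bound (sqrt (k / 2) * (a * (1 - u * u)) / sqrt (Gprim g a - Gprim g (a * (1 - u * u))))). lra.
Qed.

Lemma P_upper_neg g (H : GH g) k m : 0 < k -> m < 0 ->
  (forall z, m <= z <= 0 -> k * (z * z) <= z * g z) -> - P g m <= (PI / 2) / sqrt (k / 2).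
Proof.
  intros Hk Hm Hz. assert (Hal : 0 < sqrt (k / 2)) by (apply sqrt_lt_R0; lra).
  enough (- ((PI / 2) / sqrt (k / 2)) <= P g m) by lra.
  apply P_ge; auto. lra. intros u Hu.
  rewrite (subst_eq g H m u) by lra.
  assert (Hb : 0 <= 1 - u * u < 1) by nra.
  assert (Hb2 : m < m * (1 - u * u) <= 0) by nra.
  set (b := m * (1 - u * u)) in *.
  assert (Eb : ex_RInt (integrand g (Gprim g m)) b 0).
  { apply exRInt_R. intros z Hz'. rewrite Rmin_left, Rmax_right in Hz' by lra.
    apply integrand_cont; auto. apply (inside g H m (1 - u * u)); auto. lra.
    fold b. rewrite Rmin_right, Rmax_left by lra. lra. }
  rewrite <- (opp_RInt_swap (V:=R_CompleteNormedModule) _ b 0 Eb). change (opp ?x) with (- x).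
  enough (RInt (integrand g (Gprim g m)) b 0 <= (PI / 2) / sqrt (k / 2)) by lra.
  eapply Rle_trans. apply (prufer g H (Gprim g m) k b 0); auto. lra.
  - intros z Hz'. split. apply (inside g H m (1 - u * u)); auto. 
    lra. fold b. rewrite Rmin_right, Rmax_left; lra. apply Hz; lra.
  - rewrite Rmult_0_r, Rdiv_0_l, atan_0, Rminus_0_l.
    apply Rmult_le_compat_r. left; apply Rinv_0_lt_compat; auto.
    destruct (atan_bound (sqrt (k / 2) * b / sqrt (Gprim g m - Gprim g b))). lra.
Qed.

Lemma Lp_gt g (H : GH g) x : 0 <= x -> Rbar_lt (Gprim g x) (Lim (Gprim g) p_infty).
Proof.
  intros Hx. destruct (INR_unbounded x) as [N HN].
  apply Rbar_lt_le_trans with (Gprim g (INR N)).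
  simpl. apply G_incr; auto; lra.
  unfold Lim. rewrite <- (Lim_seq_const (Gprim g (INR N))).
  apply Lim_seq_le_loc. exists N. intros n Hn. simpl.
  apply le_INR in Hn. destruct (Req_dec (INR N) (INR n)) as [E|E]. rewrite E; lra.
  left. apply G_incr; auto. lra.
Qed.

Lemma Lm_gt g (H : GH g) x : x <= 0 -> Rbar_lt (Gprim g x) (Lim (Gprim g) m_infty).
Proof.
  intros Hx. destruct (INR_unbounded (- x)) as [N HN].
  apply Rbar_lt_le_trans with (Gprim g (- INR N)).
  simpl. apply G_decr; auto; lra.
  unfold Lim. rewrite <- (Lim_seq_const (Gprim g (- INR N))).
  apply Lim_seq_le_loc. exists N. intros n Hn. simpl.
  apply le_INR in Hn. destruct (Req_dec (INR N) (INR n)) as [E|E]. rewrite E; lra.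
  left. apply G_decr; auto. pose proof (pos_INR N). lra.
Qed.

Lemma adm_iff g c : admissible g c <->
  0 < c /\ Rbar_lt c (Lim (Gprim g) m_infty) /\ Rbar_lt c (Lim (Gprim g) p_infty).
Proof.
  unfold admissible. destruct (Lim (Gprim g) m_infty) as [x| |]; destruct (Lim (Gprim g) p_infty) as [y| |];
    simpl; try tauto.
  split; intros [H1 H2]; split; auto.
  - split. apply Rlt_le_trans with (1 := H2), Rmin_l. apply Rlt_le_trans with (1 := H2), Rmin_r.
  - apply Rmin_glb_lt; tauto.
Qed.

Lemma Rbar_lt_open c0 L : Rbar_lt (Finite c0) L -> exists d, 0 < d /\ forall c, Rabs (c - c0) < d -> Rbar_lt (Finite c) L.
Proof.
  destruct L as [l| |]; simpl; intros Hl.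
  - exists (l - c0). split. lra. intros c Hc. apply Rabs_def2 in Hc. lra.
  - exists 1. split. lra. auto.
  - contradiction.
Qed.

Lemma adm_open g c0 : admissible g c0 -> exists d, 0 < d /\ forall c, Rabs (c - c0) < d -> admissible g c.
Proof.
  intros Hc. apply adm_iff in Hc. destruct Hc as [H0 [H1 H2]].
  destruct (Rbar_lt_open _ _ H1) as [d1 [Hd1 A1]]. destruct (Rbar_lt_open _ _ H2) as [d2 [Hd2 A2]].
  exists (Rmin c0 (Rmin d1 d2)). split. repeat apply Rmin_pos; auto.
  intros c Hc. pose proof (Rmin_l c0 (Rmin d1 d2)). pose proof (Rmin_r c0 (Rmin d1 d2)).
  pose proof (Rmin_l d1 d2). pose proof (Rmin_r d1 d2).
  apply adm_iff. split. apply Rabs_def2 in Hc. lra. split. apply A1; lra. apply A2; lra.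
Qed.

Lemma adm_between g c1 c2 c : admissible g c1 -> admissible g c2 -> Rmin c1 c2 <= c <= Rmax c1 c2 -> admissible g c.
Proof.
  intros A1 A2 Hc. apply adm_iff in A1. apply adm_iff in A2. apply adm_iff.
  destruct A1 as [P1 [L1 M1]]. destruct A2 as [P2 [L2 M2]].
  unfold Rmin, Rmax in Hc. destruct Rle_dec.
  - split. lra. split. apply Rbar_le_lt_trans with (2 := L2); simpl; lra.
    apply Rbar_le_lt_trans with (2 := M2); simpl; lra.
  - split. lra. split. apply Rbar_le_lt_trans with (2 := L1); simpl; lra.
    apply Rbar_le_lt_trans with (2 := M1); simpl; lra.
Qed.



Lemma xp_cont g (H : GH g) (xp : R -> R)
  (Hxp : forall c : R, admissible g c -> 0 < xp c /\ Gprim g (xp c) = c) c0 :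
  admissible g c0 -> continuous xp c0.
Proof.
  intros Hc0. apply cont1_intro. intros eps Heps.
  destruct (Hxp c0 Hc0) as [Ha0 E0]. set (a0 := xp c0) in *.
  destruct (adm_open g c0 Hc0) as [d0 [Hd0 Hadm]].
  set (e := Rmin eps a0 / 2).
  assert (He : 0 < e /\ e < eps /\ e < a0).
  { unfold e. pose proof (Rmin_l eps a0). pose proof (Rmin_r eps a0).
    assert (0 < Rmin eps a0) by (apply Rmin_pos; lra). lra. }
  assert (G1 : Gprim g (a0 - e) < c0) by (rewrite <- E0; apply G_incr; auto; lra).
  assert (G2 : c0 < Gprim g (a0 + e)) by (rewrite <- E0; apply G_incr; auto; lra).
  exists (Rmin d0 (Rmin (c0 - Gprim g (a0 - e)) (Gprim g (a0 + e) - c0))).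
  split. repeat apply Rmin_pos; lra.
  intros c Hc.
  pose proof (Rmin_l d0 (Rmin (c0 - Gprim g (a0 - e)) (Gprim g (a0 + e) - c0))).
  pose proof (Rmin_r d0 (Rmin (c0 - Gprim g (a0 - e)) (Gprim g (a0 + e) - c0))).
  pose proof (Rmin_l (c0 - Gprim g (a0 - e)) (Gprim g (a0 + e) - c0)).
  pose proof (Rmin_r (c0 - Gprim g (a0 - e)) (Gprim g (a0 + e) - c0)).
  destruct (Hxp c (Hadm c ltac:(lra))) as [Ha Ea].
  apply Rabs_def2 in Hc. destruct Hc.
  assert (a0 - e < xp c) by (apply (G_lt_pos g H); try lra; rewrite Ea; lra).
  assert (xp c < a0 + e) by (apply (G_lt_pos g H); try lra; rewrite Ea; lra).
  apply Rabs_def1; lra.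
Qed.

Lemma xm_cont g (H : GH g) (xm : R -> R)
  (Hxm : forall c : R, admissible g c -> xm c < 0 /\ Gprim g (xm c) = c) c0 :
  admissible g c0 -> continuous xm c0.
Proof.
  intros Hc0. apply cont1_intro. intros eps Heps.
  destruct (Hxm c0 Hc0) as [Ha0 E0]. set (a0 := xm c0) in *.
  destruct (adm_open g c0 Hc0) as [d0 [Hd0 Hadm]].
  set (e := Rmin eps (- a0) / 2).
  assert (He : 0 < e /\ e < eps /\ e < - a0).
  { unfold e. pose proof (Rmin_l eps (- a0)). pose proof (Rmin_r eps (- a0)).
    assert (0 < Rmin eps (- a0)) by (apply Rmin_pos; lra). lra. }
  assert (G1 : Gprim g (a0 + e) < c0) by (rewrite <- E0; apply G_decr; auto; lra).
  assert (G2 : c0 < Gprim g (a0 - e)) by (rewrite <- E0; apply G_decr; auto; lra).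
  exists (Rmin d0 (Rmin (c0 - Gprim g (a0 + e)) (Gprim g (a0 - e) - c0))).
  split. repeat apply Rmin_pos; lra.
  intros c Hc.
  pose proof (Rmin_l d0 (Rmin (c0 - Gprim g (a0 + e)) (Gprim g (a0 - e) - c0))).
  pose proof (Rmin_r d0 (Rmin (c0 - Gprim g (a0 + e)) (Gprim g (a0 - e) - c0))).
  pose proof (Rmin_l (c0 - Gprim g (a0 + e)) (Gprim g (a0 - e) - c0)).
  pose proof (Rmin_r (c0 - Gprim g (a0 + e)) (Gprim g (a0 - e) - c0)).
  destruct (Hxm c (Hadm c ltac:(lra))) as [Ha Ea].
  apply Rabs_def2 in Hc. destruct Hc.
  assert (xm c < a0 + e) by (apply (G_lt_neg g H); try lra; rewrite Ea; lra).
  assert (a0 - e < xm c) by (apply (G_lt_neg g H); try lra; rewrite Ea; lra).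
  apply Rabs_def1; lra.
Qed.

Lemma P_cont g (H : GH g) a0 : a0 <> 0 -> continuous (P g) a0.
Proof.
  intros Ha0. unfold P. apply (param_cont (Qf g) a0 (Rabs a0)).
  apply Rabs_pos_lt; auto.
  intros p s Hp. apply Q_cont; auto. intros ->. rewrite Rminus_0_l, Rabs_Ropp in Hp. lra.
Qed.

Lemma tau_eq g (H : GH g) lambda xm xp
  (Hxp : forall c : R, admissible g c -> 0 < xp c /\ Gprim g (xp c) = c)
  (Hxm : forall c : R, admissible g c -> xm c < 0 /\ Gprim g (xm c) = c) c :
  admissible g c -> tau g lambda xm xp c = sqrt (2 / lambda) * P g (xp c) + sqrt (2 / lambda) * (- P g (xm c)).
Proof.
  intros Hc. unfold tau, tau_plus, tau_minus.
  destruct (Hxp c Hc) as [Ha Ea]. destruct (Hxm c Hc) as [Hm Em].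
  f_equal; f_equal.
  - generalize Ea Ha. generalize (xp c). intros a Ea' Ha'. rewrite <- Ea'. apply tau_plus_eq; auto.
  - generalize Em Hm. generalize (xm c). intros m Em' Hm'. rewrite <- Em'. apply tau_minus_eq; auto.
Qed.

Lemma tau_cont g (H : GH g) lambda xm xp
  (Hxp : forall c : R, admissible g c -> 0 < xp c /\ Gprim g (xp c) = c)
  (Hxm : forall c : R, admissible g c -> xm c < 0 /\ Gprim g (xm c) = c) c0 :
  admissible g c0 -> continuous (tau g lambda xm xp) c0.
Proof.
  intros Hc0.
  apply continuous_ext_loc with (fun c => sqrt (2 / lambda) * P g (xp c) + sqrt (2 / lambda) * (- P g (xm c))).
  - destruct (adm_open g c0 Hc0) as [d [Hd Had]].
    exists (mkposreal d Hd). intros c Hc. symmetry. apply tau_eq; auto.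
  - destruct (Hxp c0 Hc0) as [Ha _]. destruct (Hxm c0 Hc0) as [Hm _].
    apply (continuous_plus (fun c => sqrt (2 / lambda) * P g (xp c)) (fun c => sqrt (2 / lambda) * (- P g (xm c)))).
    + apply (continuous_mult (fun _ : R => sqrt (2 / lambda)) (fun c => P g (xp c))). apply continuous_const.
      apply (continuous_comp xp (P g)). apply (xp_cont g H xp Hxp); auto. apply P_cont; auto; lra.
    + apply (continuous_mult (fun _ : R => sqrt (2 / lambda)) (fun c => - P g (xm c))). apply continuous_const.
      apply (continuous_opp (fun c => P g (xm c))).
      apply (continuous_comp xm (P g)). apply (xm_cont g H xm Hxm); auto. apply P_cont; auto; lra.
Qed.

Lemma sq_gt a b T : 0 < a -> 0 < b -> 0 < T -> T * T < a * a / b -> T < a / sqrt b.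
Proof.
  intros Ha Hb HT Hab. assert (Hs : 0 < sqrt b) by (apply sqrt_lt_R0; auto).
  assert (Hss : sqrt b * sqrt b = b) by (apply sqrt_sqrt; lra).
  assert (E : a / sqrt b * (a / sqrt b) = a * a / b).
  { replace (a * a / b) with (a * a / (sqrt b * sqrt b)) by (rewrite Hss; reflexivity). field; lra. }
  assert (0 < a / sqrt b) by (apply Rdiv_lt_0_compat; auto).
  apply Rnot_le_lt. intros Hn. assert (a / sqrt b * (a / sqrt b) <= T * T) by nra. lra.
Qed.

Lemma GH_of g (Hlip : locally_lipschitz g) (Hg00 : g 0 = 0) (Hsign : forall x : R, x <> 0 -> g x * x > 0) : GH g.
Proof.
  split; auto. intros x. apply cont1_intro. intros eps Heps.
  destruct (Hlip x) as [d [L [Hd HL]]].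
  exists (Rmin d (eps / (Rabs L + 1))). split.
  apply Rmin_pos; auto. apply Rdiv_lt_0_compat; auto. pose proof (Rabs_pos L); lra.
  intros y Hy. pose proof (Rmin_l d (eps / (Rabs L + 1))). pose proof (Rmin_r d (eps / (Rabs L + 1))).
  specialize (HL y x ltac:(lra) ltac:(rewrite Rminus_diag, Rabs_R0; lra)).
  assert (L * Rabs (y - x) <= Rabs L * Rabs (y - x)) by (apply Rmult_le_compat_r; [apply Rabs_pos | apply Rle_abs]).
  assert (Rabs L * Rabs (y - x) <= Rabs L * (eps / (Rabs L + 1))).
  { apply Rmult_le_compat_l. apply Rabs_pos. lra. }
  assert (Rabs L * (eps / (Rabs L + 1)) < eps).
  { pose proof (Rabs_pos L). apply (Rmult_lt_reg_r (Rabs L + 1)). lra.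
    replace (Rabs L * (eps / (Rabs L + 1)) * (Rabs L + 1)) with (Rabs L * eps) by (field; lra). nra. }
  lra.
Qed.

Lemma ivt_tau g (H : GH g) lambda xm xp
  (Hxp : forall c : R, admissible g c -> 0 < xp c /\ Gprim g (xp c) = c)
  (Hxm : forall c : R, admissible g c -> xm c < 0 /\ Gprim g (xm c) = c) c1 c2 T :
  admissible g c1 -> admissible g c2 -> tau g lambda xm xp c1 < T -> T < tau g lambda xm xp c2 ->
  exists c, admissible g c /\ tau g lambda xm xp c = T.
Proof.
  intros A1 A2 T1 T2.
  assert (Hct : forall c, Rmin c1 c2 <= c <= Rmax c1 c2 -> continuous (tau g lambda xm xp) c).
  { intros c Hc. apply tau_cont; auto. apply (adm_between g c1 c2); auto. }
  destruct (Rlt_dec c1 c2) as [Hlt|Hge].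
  - destruct (IVT_interv (fun c => tau g lambda xm xp c - T) c1 c2) as [z [Hz Ez]]; auto; try lra.
    + intros a Ha. apply continuity_pt_filterlim.
      apply (continuous_minus (tau g lambda xm xp) (fun _ => T)).
      apply Hct. rewrite Rmin_left, Rmax_right; lra. apply continuous_const.
    + exists z. split. apply (adm_between g c1 c2); auto. rewrite Rmin_left, Rmax_right; lra. lra.
  - destruct (Req_dec c1 c2) as [E|Hne]. subst. lra.
    assert (Hlt : c2 < c1) by lra.
    destruct (IVT_interv (fun c => T - tau g lambda xm xp c) c2 c1) as [z [Hz Ez]]; auto; try lra.
    + intros a Ha. apply continuity_pt_filterlim.
      apply (continuous_minus (fun _ => T) (tau g lambda xm xp)). apply continuous_const.
      apply Hct. rewrite Rmin_right, Rmax_left; lra.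
    + exists z. split. apply (adm_between g c1 c2); auto. rewrite Rmin_right, Rmax_left; lra. lra.
Qed.

Lemma tau_lower g (H : GH g) lambda xm xp
  (Hxp : forall c : R, admissible g c -> 0 < xp c /\ Gprim g (xp c) = c)
  (Hxm : forall c : R, admissible g c -> xm c < 0 /\ Gprim g (xm c) = c) c :
  0 < lambda -> admissible g c ->
  sqrt (2 / lambda) * (3 / 4 * xp c) / sqrt c <= tau g lambda xm xp c /\
  sqrt (2 / lambda) * (3 / 4 * - xm c) / sqrt c <= tau g lambda xm xp c.
Proof.
  intros Hl Hc. rewrite (tau_eq g H lambda xm xp Hxp Hxm c Hc).
  destruct (Hxp c Hc) as [Ha Ea]. destruct (Hxm c Hc) as [Hm Em].
  pose proof (P_lower_pos g H (xp c) Ha) as L1. pose proof (P_lower_neg g H (xm c) Hm) as L2.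
  rewrite Ea in L1. rewrite Em in L2.
  assert (Hs : 0 < sqrt (2 / lambda)) by (apply sqrt_lt_R0; apply Rdiv_lt_0_compat; lra).
  assert (Hc0 : 0 < sqrt c) by (apply sqrt_lt_R0; apply adm_iff in Hc; tauto).
  assert (0 <= 3 / 4 * xp c / sqrt c) by (apply div_nonneg; lra).
  assert (0 <= 3 / 4 * - xm c / sqrt c) by (apply div_nonneg; lra).
  unfold Rdiv in *. split; nra.
Qed.

Theorem proposition3p1
  (g : R -> R) (g0 lambda : R) (xm xp : R -> R)
  (Hlip : locally_lipschitz g)
  (Hg00 : g 0 = 0)
  (Hsign : forall x : R, x <> 0 -> g x * x > 0)
  (Hg0 : is_liminf_at0 (fun x => g x / x) g0)
  (Hg0pos : 0 < g0)
  (Hbdd : exists M : R, forall x : R, x <= 0 -> Rabs (g x) <= M)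
  (Hlam : 0 < lambda)
  (Hxp : forall c : R, admissible g c -> 0 < xp c /\ Gprim g (xp c) = c)
  (Hxm : forall c : R, admissible g c -> xm c < 0 /\ Gprim g (xm c) = c) :
  (forall c : R, admissible g c ->
     ex_RInt_gen (integrand g c) (at_point 0) (at_left (xp c)) /\
     ex_RInt_gen (integrand g c) (at_right (xm c)) (at_point 0)) /\
  (forall c : R, admissible g c -> continuous (tau g lambda xm xp) c) /\
  (forall T : R, 2 * PI / sqrt (lambda * g0) < T ->
     exists c : R, admissible g c /\ tau g lambda xm xp c = T).
Proof.
  pose proof (GH_of g Hlip Hg00 Hsign) as H.
  split; [|split].
  - intros c Hc. destruct (Hxp c Hc) as [Ha Ea]. destruct (Hxm c Hc) as [Hm Em]. split.
    + revert Ea Ha. generalize (xp c). intros a Ea Ha. rewrite <- Ea.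
      exists (P g a). apply tau_plus_gen; auto.
    + revert Em Hm. generalize (xm c). intros m Em Hm. rewrite <- Em.
      exists (- P g m). apply tau_minus_gen; auto.
  - intros c Hc. apply tau_cont; auto.
  - intros T HT.
    assert (Hsq : 0 < sqrt (lambda * g0)) by (apply sqrt_lt_R0; nra).
    assert (Hsq2 : sqrt (lambda * g0) * sqrt (lambda * g0) = lambda * g0) by (apply sqrt_sqrt; nra).
    assert (HT0 : 0 < T).
    { apply Rlt_trans with (2 := HT). apply Rdiv_lt_0_compat; auto. pose proof PI_RGT_0; lra. }
    assert (HPI := PI_RGT_0).
    assert (HT2 : 2 * PI < T * sqrt (lambda * g0)).
    { apply (Rmult_lt_compat_r (sqrt (lambda * g0))) in HT; auto.
      replace (2 * PI / sqrt (lambda * g0) * sqrt (lambda * g0)) with (2 * PI) in HT by (field; lra). lra. }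
    assert (HT3 : 4 * (PI * PI) < T * T * (lambda * g0)).
    { rewrite <- Hsq2. nra. }
    set (q := 4 * (PI * PI) / (T * T)).
    assert (Hq : 0 < q) by (unfold q; apply Rdiv_lt_0_compat; nra).
    assert (Hqg : q < lambda * g0).
    { unfold q. apply (Rmult_lt_reg_r (T * T)). nra.
      replace (4 * (PI * PI) / (T * T) * (T * T)) with (4 * (PI * PI)) by (field; lra). lra. }
    set (k := (q / lambda + g0) / 2).
    assert (Hk1 : q < lambda * k).
    { unfold k. replace (lambda * ((q / lambda + g0) / 2)) with ((q + lambda * g0) / 2) by (field; lra). lra. }
    assert (Hk2 : k < g0).
    { unfold k. assert (q / lambda < g0).
      { apply (Rmult_lt_reg_l lambda); auto. replace (lambda * (q / lambda)) with q by (field; lra). lra. }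
      lra. }
    assert (Hk0 : 0 < k) by (unfold k; assert (0 < q / lambda) by (apply Rdiv_lt_0_compat; lra); lra).
    destruct Hg0 as [Hinf _]. destruct (Hinf (g0 - k) ltac:(lra)) as [d [Hd Hdx]].
    assert (Hkz : forall z, Rabs z < d -> k * (z * z) <= z * g z).
    { intros z Hz. destruct (Req_dec z 0) as [->|Hz0]. rewrite (g00 g H). lra.
      assert (Hz2 : 0 < Rabs z) by (apply Rabs_pos_lt; auto).
      specialize (Hdx z (conj Hz2 Hz)).
      assert (k < g z / z) by lra.
      assert (0 < z * z) by nra.
      replace (z * g z) with (g z / z * (z * z)) by (field; auto). nra. }
    set (c1 := Rmin (Gprim g (d / 2)) (Gprim g (- (d / 2)))).
    assert (Gd1 : 0 < Gprim g (d / 2)) by (apply (G_pos g H); lra).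
    assert (Gd2 : 0 < Gprim g (- (d / 2))) by (apply (G_pos g H); lra).
    assert (Hc1p : 0 < c1) by (unfold c1; apply Rmin_pos; auto).
    assert (Hc1l : c1 <= Gprim g (d / 2)) by apply Rmin_l.
    assert (Hc1r : c1 <= Gprim g (- (d / 2))) by apply Rmin_r.
    assert (A1 : admissible g c1).
    { apply adm_iff. split; auto. split.
      - apply Rbar_le_lt_trans with (Gprim g (- (d / 2))). simpl; auto. apply Lm_gt; auto; lra.
      - apply Rbar_le_lt_trans with (Gprim g (d / 2)). simpl; auto. apply Lp_gt; auto; lra. }
    destruct (Hxp c1 A1) as [Hxp1 Exp1]. destruct (Hxm c1 A1) as [Hxm1 Exm1].
    assert (Bxp : xp c1 <= d / 2) by (apply (G_le_pos g H); try lra; rewrite Exp1; auto).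
    assert (Bxm : - (d / 2) <= xm c1) by (apply (G_le_neg g H); try lra; rewrite Exm1; auto).
    assert (U1 : P g (xp c1) <= (PI / 2) / sqrt (k / 2)).
    { apply P_upper_pos; auto. intros z Hz. apply Hkz. rewrite Rabs_right; lra. }
    assert (U2 : - P g (xm c1) <= (PI / 2) / sqrt (k / 2)).
    { apply P_upper_neg; auto. intros z Hz. apply Hkz. rewrite Rabs_left1; lra. }
    assert (Hs2 : 0 < sqrt (2 / lambda)) by (apply sqrt_lt_R0; apply Rdiv_lt_0_compat; lra).
    assert (Hsk : 0 < sqrt (k / 2)) by (apply sqrt_lt_R0; lra).
    assert (Tc1 : tau g lambda xm xp c1 < T).
    { rewrite (tau_eq g H lambda xm xp Hxp Hxm c1 A1).
      set (X := sqrt (2 / lambda) * PI / sqrt (k / 2)).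
      assert (X1 : sqrt (2 / lambda) * P g (xp c1) + sqrt (2 / lambda) * - P g (xm c1) <= X).
      { unfold X. apply Rle_trans with (sqrt (2 / lambda) * ((PI / 2) / sqrt (k / 2)) + sqrt (2 / lambda) * ((PI / 2) / sqrt (k / 2))).
        apply Rplus_le_compat; apply Rmult_le_compat_l; lra.
        right. field. lra. }
      assert (X0 : 0 < X) by (unfold X; apply Rdiv_lt_0_compat; nra).
      assert (XX : X * X = 4 * (PI * PI) / (lambda * k)).
      { unfold X. replace (sqrt (2 / lambda) * PI / sqrt (k / 2) * (sqrt (2 / lambda) * PI / sqrt (k / 2)))
          with ((sqrt (2 / lambda) * sqrt (2 / lambda)) * (PI * PI) / (sqrt (k / 2) * sqrt (k / 2))) by (field; lra).
        rewrite !sqrt_sqrt. field. split; lra. lra. apply Rlt_le, Rdiv_lt_0_compat; lra. }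
      assert (XT : X * X < T * T).
      { rewrite XX. apply (Rmult_lt_reg_r (lambda * k)). nra.
        replace (4 * (PI * PI) / (lambda * k) * (lambda * k)) with (4 * (PI * PI)) by (field; nra).
        unfold q in Hk1. apply (Rmult_lt_compat_r (T * T)) in Hk1. 2: nra.
        replace (4 * (PI * PI) / (T * T) * (T * T)) with (4 * (PI * PI)) in Hk1 by (field; lra). lra. }
      assert (X < T) by nra. lra. }
    destruct Hbdd as [M HM].
    assert (HM0 : 0 <= M) by (pose proof (HM 0 ltac:(lra)); pose proof (Rabs_pos (g 0)); lra).
    assert (exists c2, admissible g c2 /\ T < tau g lambda xm xp c2) as [c2 [A2 Tc2]].
    { destruct (classic (forall R, 0 < R -> Rbar_lt (Gprim g (- R)) (Lim (Gprim g) p_infty))) as [Hall|Hnot].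
      - set (M1 := M + 1).
        set (RR := 8 * lambda * M1 * (T * T) / 9 + 1).
        assert (HR : 0 < RR) by (unfold RR, M1; assert (0 <= 8 * lambda * (M + 1) * (T * T) / 9) by (apply div_nonneg; [apply Rmult_le_pos; nra | lra]); lra).
        set (c := Gprim g (- RR)).
        assert (Hc : 0 < c) by (apply (G_pos g H); lra).
        assert (Ac : admissible g c).
        { apply adm_iff. split; auto. split. apply Lm_gt; auto; lra. apply Hall; auto. }
        exists c. split; auto.
        destruct (Hxm c Ac) as [Hm Em].
        assert (Exm : xm c = - RR).
        { apply Rle_antisym. apply (G_le_neg g H); try lra; rewrite Em; unfold c; lra.
          apply (G_le_neg g H); try lra; rewrite Em; unfold c; lra. }
        destruct (tau_lower g H lambda xm xp Hxp Hxm c Hlam Ac) as [_ L2].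
        eapply Rlt_le_trans. 2: exact L2. rewrite Exm, Ropp_involutive.
        replace (sqrt (2 / lambda) * (3 / 4 * RR) / sqrt c) with ((sqrt (2 / lambda) * (3 / 4 * RR)) / sqrt c) by reflexivity.
        apply sq_gt; auto. nra.
        assert (GcR : c <= M1 * RR).
        { unfold c, M1. pose proof (G_bound g H M (- RR) HM ltac:(lra)). nra. }
        assert (E2 : sqrt (2 / lambda) * (3 / 4 * RR) * (sqrt (2 / lambda) * (3 / 4 * RR)) = 9 / 8 / lambda * (RR * RR)).
        { replace (sqrt (2 / lambda) * (3 / 4 * RR) * (sqrt (2 / lambda) * (3 / 4 * RR))) with
            ((sqrt (2 / lambda) * sqrt (2 / lambda)) * (9 / 16 * (RR * RR))) by field.
          rewrite sqrt_sqrt. field. lra. apply Rlt_le, Rdiv_lt_0_compat; lra. }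
        rewrite E2.
        apply Rlt_le_trans with (9 / 8 / lambda * (RR * RR) / (M1 * RR)).
        + replace (9 / 8 / lambda * (RR * RR) / (M1 * RR)) with (9 / 8 / lambda / M1 * RR) by (field; unfold M1; lra).
          unfold RR. replace (9 / 8 / lambda / M1 * (8 * lambda * M1 * (T * T) / 9 + 1)) with (T * T + 9 / 8 / lambda / M1) by (field; unfold M1; lra).
          assert (0 < 9 / 8 / lambda / M1) by (unfold M1; apply Rdiv_lt_0_compat; [apply Rdiv_lt_0_compat|]; lra). lra.
        + unfold Rdiv. apply Rmult_le_compat_l. left. repeat apply Rmult_lt_0_compat; try lra; apply Rinv_0_lt_compat; lra.
          apply Rinv_le_contravar; auto.
      - apply not_all_ex_not in Hnot. destruct Hnot as [R0 HR0].
        apply imply_to_and in HR0. destruct HR0 as [HR0 HnR].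
        apply Rbar_not_lt_le in HnR.
        assert (Hp0 := Lp_gt g H 0 ltac:(lra)). rewrite G_0 in Hp0.
        assert (Hm0 := Lm_gt g H (- R0) ltac:(lra)).
        destruct (Lim (Gprim g) p_infty) as [L| |] eqn:EL; simpl in HnR, Hp0; try contradiction.
        set (r := 8 * lambda * L * (T * T) / 9 + 1).
        assert (Hr : 1 <= r) by (unfold r; assert (0 <= 8 * lambda * L * (T * T) / 9) by (apply div_nonneg; [apply Rmult_le_pos; nra | lra]); lra).
        set (c := Gprim g r).
        assert (Hc : 0 < c) by (apply (G_pos g H); lra).
        assert (HcL : Rbar_lt c (Lim (Gprim g) p_infty)) by (apply Lp_gt; auto; lra).
        rewrite EL in HcL. simpl in HcL.
        assert (Ac : admissible g c).
        { apply adm_iff. split; auto. split.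
          apply Rbar_le_lt_trans with (2 := Hm0). simpl. lra.
          rewrite EL. simpl. auto. }
        exists c. split; auto.
        destruct (Hxp c Ac) as [Hp Ep].
        assert (Exp : xp c = r).
        { apply Rle_antisym. apply (G_le_pos g H); try lra; rewrite Ep; unfold c; lra.
          apply (G_le_pos g H); try lra; rewrite Ep; unfold c; lra. }
        destruct (tau_lower g H lambda xm xp Hxp Hxm c Hlam Ac) as [L1 _].
        eapply Rlt_le_trans. 2: exact L1. rewrite Exp.
        apply sq_gt; auto. nra.
        assert (E2 : sqrt (2 / lambda) * (3 / 4 * r) * (sqrt (2 / lambda) * (3 / 4 * r)) = 9 / 8 / lambda * (r * r)).
        { replace (sqrt (2 / lambda) * (3 / 4 * r) * (sqrt (2 / lambda) * (3 / 4 * r))) with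
            ((sqrt (2 / lambda) * sqrt (2 / lambda)) * (9 / 16 * (r * r))) by field.
          rewrite sqrt_sqrt. field. lra. apply Rlt_le, Rdiv_lt_0_compat; lra. }
        rewrite E2.
        assert (HL : 0 < L) by lra.
        apply Rlt_le_trans with (9 / 8 / lambda * (r * r) / L).
        + apply Rlt_le_trans with (9 / 8 / lambda * r / L).
          * unfold r at 1. replace (9 / 8 / lambda * (8 * lambda * L * (T * T) / 9 + 1) / L) with (T * T + 9 / 8 / lambda / L) by (field; lra).
            assert (0 < 9 / 8 / lambda / L) by (apply Rdiv_lt_0_compat; [apply Rdiv_lt_0_compat|]; lra). lra.
          * unfold Rdiv. apply Rmult_le_compat_r. left; apply Rinv_0_lt_compat; lra.
            assert (0 < 9 * / 8 * / lambda) by (assert (0 < / lambda) by (apply Rinv_0_lt_compat; lra); nra). nra.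
        + unfold Rdiv. apply Rmult_le_compat_l. left. repeat apply Rmult_lt_0_compat; try lra; apply Rinv_0_lt_compat; lra.
          apply Rinv_le_contravar; lra. }
    apply (ivt_tau g H lambda xm xp Hxp Hxm c1 c2 T); auto.
Qed.
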